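(* Let $\mathcal W,\mathcal U,\mathcal V$ be finite, $\Phi_{U|W}$ a codebook distribution and $\Phi_{V|W,U}$ a memoryless channel, with $\Phi_{V|W}=\sum_u\Phi_{U|W}\Phi_{V|W,U}$. Let $\mathcal B^{(n)}=\{u^n(w^n,j):w^n\in\mathcal W^n, j\in[2^{nR}]\}$ have independent entries with $u^n(w^n,j)\sim\prod_t\Phi_{U|W}(\cdot|w_t)$, and for each $w^n$ define $P_{V^n|W^n=w^n}(v^n)=2^{-nR}\sum_{j}\prod_{t=1}^n\Phi_{V|W,U}(v_t|w_t,u_t(w^n,j))$ and $Q_{V^n|W^n=w^n}(v^n)=\prod_t\Phi_{V|W}(v_t|w_t)$. Let $(\gamma_n)$ satisfy $\gamma_n\sqrt n\to\infty$. Then there exists a sequence $\epsilon_n\to0$, depending only on $\Phi_{U,V|W}$ and $(\gamma_n)$, such that for every $n$ and every $w^n\in\mathcal W^n$ with $R>I_{\mathbb P\Phi}(U;V|W)+\gamma_n$, $$\mathbf E\|P_{V^n|W^n=w^n}-Q_{V^n|W^n=w^n}\|_{TV}<\epsilon_n.$$ If $\gamma_n=\gamma>0$ is constant, $\epsilon_n$ can be chosen to decay exponentially in $n$.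
   Context: The empirical distribution of $w^n$ is $\mathbb P_{w^n}(w)=\frac1n\sum_t\mathbf 1(w_t=w)$; $I_{\mathbb P\Phi}(U;V|W)$ is computed under $\mathbb P_{w^n}(w)\Phi_{U,V|W}(u,v|w)$. Expectation over the random codebook; total variation is half the $\ell_1$ distance; logarithms base 2. *)

(* Defs.v *)
From Stdlib Require Import Reals.
From mathcomp Require Import all_boot.

Set Implicit Arguments.
Unset Strict Implicit.
Unset Printing Implicit Defensive.

Local Open Scope R_scope.

Definition rsum (T : finType) (f : T -> R) : R := foldr Rplus 0 (map f (enum T)).
Definition rprod (T : finType) (f : T -> R) : R := foldr Rmult 1 (map f (enum T)).

Definition log2 (x : R) : R := ln x / ln 2.

Definition is_dist (T : finType) (p : T -> R) : Prop :=
  (forall x, 0 <= p x) /\ rsum p = 1.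

Definition PhiVW (W U V : finType) (PU : W -> U -> R) (PV : W -> U -> V -> R)
  (w : W) (v : V) : R := rsum (fun u => PU w u * PV w u v).

Definition emp (W : finType) (n : nat) (wn : n.-tuple W) (w : W) : R :=
  INR (count (pred1 w) wn) / INR n.

(* I(U;V|W) computed under P_{w^n}(w) Phi_{U,V|W}(u,v|w), log base 2,
   with the convention 0 log 0 = 0 *)
Definition condMI (W U V : finType) (PU : W -> U -> R) (PV : W -> U -> V -> R)
  (n : nat) (wn : n.-tuple W) : R :=
  rsum (fun w => emp wn w *
    rsum (fun u => rsum (fun v =>
      let j := PU w u * PV w u v in
      if Req_EM_T j 0 then 0
      else j * log2 (j / (PU w u * PhiVW PU PV w v))))).

(* ceiling of a real as a nat *)
Definition nceil (x : R) : nat := Z.to_nat (- Int_part (- x)).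

(* number of codewords per w^n : |[2^{nR}]| = ceil(2^{nR}) *)
Definition ncw (n : nat) (Rt : R) : nat := nceil (Rpower 2 (INR n * Rt)).

Definition codebook (W U : finType) (n M : nat) : finType :=
  {ffun (n.-tuple W * 'I_M) -> n.-tuple U}.

Definition cbprob (W U : finType) (PU : W -> U -> R) (n M : nat)
  (B : codebook W U n M) : R :=
  rprod (fun k : (n.-tuple W * 'I_M)%type =>
    rprod (fun t : 'I_n => PU (tnth k.1 t) (tnth (B k) t))).

Definition Pind (W U V : finType) (PV : W -> U -> V -> R) (n M : nat)
  (B : codebook W U n M) (wn : n.-tuple W) (vn : n.-tuple V) : R :=
  / INR M * rsum (fun j : 'I_M =>
    rprod (fun t : 'I_n => PV (tnth wn t) (tnth (B (wn, j)) t) (tnth vn t))).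

Definition Qind (W U V : finType) (PU : W -> U -> R) (PV : W -> U -> V -> R)
  (n : nat) (wn : n.-tuple W) (vn : n.-tuple V) : R :=
  rprod (fun t : 'I_n => PhiVW PU PV (tnth wn t) (tnth vn t)).

Definition tvd (T : finType) (p q : T -> R) : R :=
  / 2 * rsum (fun x => Rabs (p x - q x)).

Definition ExpTV (W U V : finType) (PU : W -> U -> R) (PV : W -> U -> V -> R)
  (Rt : R) (n : nat) (wn : n.-tuple W) : R :=
  rsum (fun B : codebook W U n (ncw n Rt) =>
    cbprob PU B * tvd (Pind PV B wn) (Qind PU PV wn)).

(* Main.v *)
Require Import Defs.
From Stdlib Require Import Reals Lra.
From Stdlib Require ZArith.
From mathcomp Require Import all_boot all_algebra.
From mathcomp Require Import Rstruct.
From mathcomp Require boolp.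
Require Import Defs.
Local Open Scope R_scope.
Set Implicit Arguments.
Unset Strict Implicit.
Unset Printing Implicit Defensive.


Lemma foldr_big (T : Type) (f : T -> R) s : foldr Rplus 0 (map f s) = \big[Rplus/0]_(x <- s) f x.
Proof. elim: s => [|x s IH]; by rewrite ?big_nil ?big_cons //= IH. Qed.
Lemma foldr_bigp (T : Type) (f : T -> R) s : foldr Rmult 1 (map f s) = \big[Rmult/1]_(x <- s) f x.
Proof. elim: s => [|x s IH]; by rewrite ?big_nil ?big_cons //= IH. Qed.
Lemma rsumE (T : finType) (f : T -> R) : rsum f = \big[Rplus/0]_(x : T) f x.
Proof. by rewrite /rsum foldr_big big_enum. Qed.
Lemma rprodE (T : finType) (f : T -> R) : rprod f = \big[Rmult/1]_(x : T) f x.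
Proof. by rewrite /rprod foldr_bigp big_enum. Qed.

Lemma tuple_prod_sum (X : finType) (n : nat) (F : 'I_n -> X -> R) :
  \big[Rplus/0]_(u : n.-tuple X) \big[Rmult/1]_(t < n) F t (tnth u t) =
  \big[Rmult/1]_(t < n) \big[Rplus/0]_(x : X) F t x.
Proof.
rewrite bigA_distr_bigA /=.
rewrite (reindex (fun u : n.-tuple X => [ffun i => tnth u i])) /=.
  apply: eq_bigr => u _; apply: eq_bigr => t _; by rewrite ffunE.
exists (fun f : {ffun 'I_n -> X} => [tuple f i | i < n]) => x _.
  by apply: eq_from_tnth => i; rewrite tnth_mktuple ffunE.
by apply/ffunP => i; rewrite ffunE tnth_mktuple.
Qed.

Lemma big_le (I : finType) (f g : I -> R) :
  (forall i, f i <= g i) -> \big[Rplus/0]_(i : I) f i <= \big[Rplus/0]_(i : I) g i.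
Proof. move=> H; apply: (big_ind2 (fun a b => a <= b)) => //; [lra| move=> *; lra]. Qed.

Lemma big_ge0 (I : finType) (f : I -> R) :
  (forall i, 0 <= f i) -> 0 <= \big[Rplus/0]_(i : I) f i.
Proof. move=> H; apply: (big_ind (fun a => 0 <= a)) => //; [lra| move=> *; lra]. Qed.

Lemma prod_ge0 (I : finType) (f : I -> R) :
  (forall i, 0 <= f i) -> 0 <= \big[Rmult/1]_(i : I) f i.
Proof. move=> H; apply: (big_ind (fun a => 0 <= a)) => //; [lra| move=> *; nra]. Qed.

Lemma prod_le (I : finType) (f g : I -> R) :
  (forall i, 0 <= f i) -> (forall i, f i <= g i) ->
  \big[Rmult/1]_(i : I) f i <= \big[Rmult/1]_(i : I) g i.
Proof.
move=> H0 H.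
pose P := fun a b => 0 <= a /\ a <= b.
suff: P (\big[Rmult/1]_(i : I) f i) (\big[Rmult/1]_(i : I) g i) by move=> [_ H1]; exact H1.
apply: big_ind2.
- rewrite /P; lra.
- move=> a b c d [? ?] [? ?]; split; first nra.
  apply: Rmult_le_compat => //.
- by move=> i _; split; [apply: H0 | apply: H].
Qed.

Lemma big_term_le (I : finType) (f : I -> R) i0 :
  (forall i, 0 <= f i) -> f i0 <= \big[Rplus/0]_(i : I) f i.
Proof.
move=> H; rewrite (bigD1 i0) //=.
have : 0 <= \big[Rplus/0]_(i | i != i0) f i.
  apply: (big_ind (fun a => 0 <= a)) => //; [lra| move=> *; lra].
lra.
Qed.

Lemma big_distrl_R (I : finType) (f : I -> R) c :
  \big[Rplus/0]_(i : I) f i * c = \big[Rplus/0]_(i : I) (f i * c).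
Proof. by rewrite big_distrl. Qed.
Lemma big_distrr_R (I : finType) (f : I -> R) c :
  c * \big[Rplus/0]_(i : I) f i = \big[Rplus/0]_(i : I) (c * f i).
Proof. by rewrite big_distrr. Qed.


Section CB.
Variables (W U : finType) (PU : W -> U -> R).
Hypothesis hPU : forall w, is_dist (PU w).
Variables (n M : nat).

Definition piw (w : n.-tuple W) (u : n.-tuple U) :=
  \big[Rmult/1]_(t < n) PU (tnth w t) (tnth u t).

Lemma piw_ge0 w u : 0 <= piw w u.
Proof. apply: prod_ge0 => t; exact: (proj1 (hPU _)). Qed.

Lemma piw_sum1 w : \big[Rplus/0]_(u : n.-tuple U) piw w u = 1.
Proof.
rewrite /piw (tuple_prod_sum (fun t x => PU (tnth w t) x)).
rewrite big1 // => t _; by rewrite -rsumE (proj2 (hPU _)).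
Qed.

Local Notation K := (n.-tuple W * 'I_M)%type.

Lemma cbprobE (B : codebook W U n M) :
  cbprob PU B = \big[Rmult/1]_(k : K) piw k.1 (B k).
Proof. rewrite /cbprob rprodE; apply: eq_bigr => k _; by rewrite rprodE. Qed.

Lemma E_prod (f : K -> n.-tuple U -> R) :
  \big[Rplus/0]_(B : codebook W U n M) (cbprob PU B * \big[Rmult/1]_(k : K) f k (B k)) =
  \big[Rmult/1]_(k : K) \big[Rplus/0]_(u : n.-tuple U) (piw k.1 u * f k u).
Proof.
rewrite bigA_distr_bigA /=; apply: eq_bigr => B _.
by rewrite cbprobE -big_split.
Qed.

Lemma bigD1_ones (k0 : K) (h : K -> R) :
  (forall k, k != k0 -> h k = 1) ->
  \big[Rmult/1]_(k : K) h k = h k0.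
Proof.
move=> H; rewrite (bigD1 k0) //= big1 ?Rmult_1_r // => k; exact: H.
Qed.

Lemma bigD2_ones (k0 k1 : K) (h : K -> R) : k0 != k1 ->
  (forall k, k != k0 -> k != k1 -> h k = 1) ->
  \big[Rmult/1]_(k : K) h k = h k0 * h k1.
Proof.
move=> nk H; rewrite (bigD1 k0) //= (bigD1 k1) /=; last by rewrite eq_sym.
rewrite big1 ?Rmult_1_r // => k /andP [h1 h2]; exact: H.
Qed.

Lemma E_one (k0 : K) (f : n.-tuple U -> R) :
  \big[Rplus/0]_(B : codebook W U n M) (cbprob PU B * f (B k0)) =
  \big[Rplus/0]_(u : n.-tuple U) (piw k0.1 u * f u).
Proof.
have := E_prod (fun k u => if k == k0 then f u else 1).
rewrite (bigD1_ones (k0 := k0)); last first.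
  move=> k /negbTE ->; under eq_bigr do rewrite Rmult_1_r; exact: piw_sum1.
rewrite eqxx => <-; apply: eq_bigr => B _; congr (_ * _).
rewrite (bigD1_ones (k0 := k0)) ?eqxx // => k /negbTE -> //.
Qed.

Lemma E_two (k0 k1 : K) (f g : n.-tuple U -> R) : k0 != k1 ->
  \big[Rplus/0]_(B : codebook W U n M) (cbprob PU B * (f (B k0) * g (B k1))) =
  \big[Rplus/0]_(u : n.-tuple U) (piw k0.1 u * f u) *
  \big[Rplus/0]_(u : n.-tuple U) (piw k1.1 u * g u).
Proof.
move=> nk.
have := E_prod (fun k u => if k == k0 then f u else if k == k1 then g u else 1).
rewrite (bigD2_ones nk); last first.
  move=> k /negbTE -> /negbTE ->; under eq_bigr do rewrite Rmult_1_r; exact: piw_sum1.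
have ->: (k1 == k0) = false by rewrite eq_sym (negbTE nk).
rewrite !eqxx => <-; apply: eq_bigr => B _; congr (_ * _).
rewrite (bigD2_ones nk); last by move=> k /negbTE -> /negbTE ->.
rewrite eqxx; case: ifP => [/eqP E|_]; last by rewrite eqxx.
by rewrite E eqxx in nk.
Qed.

Lemma E_zero : \big[Rplus/0]_(B : codebook W U n M) cbprob PU B = 1.
Proof.
have := E_prod (fun _ _ => 1).
have -> : \big[Rmult/1]_(k : K) \big[Rplus/0]_(u : n.-tuple U) (piw k.1 u * 1) = 1.
  by apply: big1 => k _; under eq_bigr do rewrite Rmult_1_r; exact: piw_sum1.
move=> <-; apply: eq_bigr => B _; by rewrite big1 ?Rmult_1_r.
Qed.

Lemma cb_ge0 (B : codebook W U n M) : 0 <= cbprob PU B.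
Proof. rewrite cbprobE; apply: prod_ge0 => k; exact: piw_ge0. Qed.

Definition EB (f : codebook W U n M -> R) :=
  \big[Rplus/0]_(B : codebook W U n M) (cbprob PU B * f B).

Lemma EB_le f g : (forall B, f B <= g B) -> EB f <= EB g.
Proof. move=> H; apply: big_le => B; apply: Rmult_le_compat_l; [exact: cb_ge0| exact: H]. Qed.

Lemma EB_add f g : EB (fun B => f B + g B) = EB f + EB g.
Proof. rewrite /EB -big_split; apply: eq_bigr => B _ /=; lra. Qed.

Lemma EB_scal c f : EB (fun B => c * f B) = c * EB f.
Proof. rewrite /EB big_distrr_R; apply: eq_bigr => B _ /=; lra. Qed.

Lemma EB_const c : EB (fun _ => c) = c.
Proof. rewrite /EB -big_distrl_R E_zero; lra. Qed.

Lemma EB_sum (I : finType) (f : I -> codebook W U n M -> R) :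
  EB (fun B => \big[Rplus/0]_(i : I) f i B) = \big[Rplus/0]_(i : I) EB (f i).
Proof.
rewrite /EB; under eq_bigr do rewrite big_distrr_R.
by rewrite exchange_big.
Qed.
End CB.


Lemma sum_const_ord (M : nat) (c : R) : \big[Rplus/0]_(j < M) c = INR M * c.
Proof.
rewrite big_const_ord; elim: M => [|m IH] /=; first lra.
rewrite IH; case: m {IH} => [|m] /=; lra.
Qed.

Lemma big_add (I : finType) (f g : I -> R) :
  \big[Rplus/0]_(i : I) (f i + g i) = \big[Rplus/0]_(i : I) f i + \big[Rplus/0]_(i : I) g i.
Proof. by rewrite big_split. Qed.

Lemma big_sub (I : finType) (f g : I -> R) :
  \big[Rplus/0]_(i : I) (f i - g i) = \big[Rplus/0]_(i : I) f i - \big[Rplus/0]_(i : I) g i.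
Proof.
have : \big[Rplus/0]_(i : I) (f i - g i) + \big[Rplus/0]_(i : I) g i = \big[Rplus/0]_(i : I) f i.
  rewrite -big_add; apply: eq_bigr => i _; lra.
lra.
Qed.

Section PerV.
Variables (W U : finType) (PU : W -> U -> R).
Hypothesis hPU : forall w, is_dist (PU w).
Variables (n M : nat) (wn : n.-tuple W).
Hypothesis hM : (0 < M)%N.

Local Notation pi := (piw PU wn).
Local Notation E := (EB PU (n:=n) (M:=M)).

Lemma INRM_pos : 0 < INR M.
Proof. apply: lt_0_INR; apply/ltP; exact: hM. Qed.

Lemma pi_E_zero (Y : n.-tuple U -> R) :
  \big[Rplus/0]_u (pi u * (Y u - \big[Rplus/0]_u' (pi u' * Y u'))) = 0.
Proof.
set m := \big[Rplus/0]_u' (pi u' * Y u').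
have -> : \big[Rplus/0]_u (pi u * (Y u - m)) = m - m * \big[Rplus/0]_u pi u.
  rewrite big_distrr_R -/m -[X in X - _]/(\big[Rplus/0]_u' (pi u' * Y u')) -big_sub.
  apply: eq_bigr => u _; lra.
rewrite piw_sum1 //; lra.
Qed.

Lemma EA2 (Y : n.-tuple U -> R) (b : R) :
  \big[Rplus/0]_u (pi u * Y u) = 0 ->
  \big[Rplus/0]_u (pi u * (Y u * Y u)) <= b ->
  E (fun B => (/ INR M * \big[Rplus/0]_(j < M) Y (B (wn, j))) ^ 2) <= b / INR M.
Proof.
move=> h0 hb.
have hMp := INRM_pos.
have -> : (fun B : codebook W U n M => (/ INR M * \big[Rplus/0]_(j < M) Y (B (wn, j))) ^ 2) =
  (fun B => / INR M * / INR M * \big[Rplus/0]_(j < M) \big[Rplus/0]_(j' < M) (Y (B (wn, j)) * Y (B (wn, j')))).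
  apply: boolp.funext => B.
  have -> : \big[Rplus/0]_(j < M) \big[Rplus/0]_(j' < M) (Y (B (wn, j)) * Y (B (wn, j'))) =
    (\big[Rplus/0]_(j < M) Y (B (wn, j))) * (\big[Rplus/0]_(j' < M) Y (B (wn, j'))).
    rewrite big_distrl_R; apply: eq_bigr => j _; by rewrite big_distrr_R.
  simpl; lra.
rewrite EB_scal EB_sum.
have -> : \big[Rplus/0]_(j < M) E (fun B => \big[Rplus/0]_(j' < M) (Y (B (wn, j)) * Y (B (wn, j')))) =
  \big[Rplus/0]_(j < M) \big[Rplus/0]_u (pi u * (Y u * Y u)).
  apply: eq_bigr => j _; rewrite EB_sum (bigD1 j) //= big1 => [|j' hj].
    rewrite Rplus_0_r /EB; exact: (E_one hPU (wn, j) (fun u => Y u * Y u)).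
  rewrite /EB (@E_two _ _ _ hPU _ _ (wn, j) (wn, j') Y Y) /= ?h0 ?Rmult_0_l //.
  by rewrite xpair_eqE eqxx /= eq_sym.
apply: Rle_trans (_ : / INR M * / INR M * (INR M * b) <= _).
  apply: Rmult_le_compat_l; first by apply: Rmult_le_pos; left; apply: Rinv_0_lt_compat.
  rewrite -sum_const_ord; apply: big_le => j; exact: hb.
apply: Req_le; field; lra.
Qed.

Lemma abs_quad (x a : R) : 0 < a -> Rabs x <= x ^ 2 / (2 * a) + a / 2.
Proof.
move=> ha.
have h2 : x ^ 2 = Rabs x * Rabs x.
  rewrite -Rabs_mult Rabs_right /=; [ring | nra].
rewrite h2.
have h := Rle_0_sqr (Rabs x - a); rewrite /Rsqr in h.
apply: (Rmult_le_reg_r (2 * a)); first lra.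
rewrite Rmult_plus_distr_r.
have -> : Rabs x * Rabs x / (2 * a) * (2 * a) = Rabs x * Rabs x by field; lra.
have -> : a / 2 * (2 * a) = a * a by field.
nra.
Qed.

Lemma abs_sub_pos (a b : R) : 0 <= a -> 0 <= b -> Rabs (a - b) <= a + b.
Proof. move=> ha hb; unfold Rabs; destruct (Rcase_abs (a - b)); lra. Qed.

Lemma E_abs_ge0 f : 0 <= E (fun B => Rabs (f B)).
Proof.
apply: big_ge0 => B; apply: Rmult_le_pos; [exact: cb_ge0| exact: Rabs_pos].
Qed.

Lemma perv (X : n.-tuple U -> R) (hX : forall u, 0 <= X u) (tau c : R) :
  0 < tau -> 0 < c ->
  E (fun B => Rabs (/ INR M * \big[Rplus/0]_(j < M) X (B (wn, j)) -
                    \big[Rplus/0]_u (pi u * X u))) <=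
  (tau / (2 * INR M * c) + c / 2) * \big[Rplus/0]_u (pi u * X u) +
  2 * \big[Rplus/0]_u (pi u * (if Rlt_dec (tau * \big[Rplus/0]_u' (pi u' * X u')) (X u) then X u else 0)).
Proof.
move=> ht hc.
have hMp := INRM_pos.
set q := \big[Rplus/0]_u (pi u * X u).
set g1 := fun u => if Rlt_dec (tau * q) (X u) then 0 else X u.
set g2 := fun u => if Rlt_dec (tau * q) (X u) then X u else 0.
set q1 := \big[Rplus/0]_u (pi u * g1 u).
set q2 := \big[Rplus/0]_u (pi u * g2 u).
have hpi u : 0 <= pi u by exact: piw_ge0.
have hg1 u : 0 <= g1 u by rewrite /g1 /=; case: Rlt_dec => hh /=; have := hX u; lra.
have hg2 u : 0 <= g2 u by rewrite /g2 /=; case: Rlt_dec => hh /=; have := hX u; lra.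
have hsplit u : X u = g1 u + g2 u by rewrite /g1 /g2 /=; case: Rlt_dec => hh /=; lra.
have hq : q = q1 + q2.
  rewrite /q /q1 /q2 -big_add; apply: eq_bigr => u _; rewrite hsplit; lra.
have hq1 : 0 <= q1 by apply: big_ge0 => u; apply: Rmult_le_pos.
have hq2 : 0 <= q2 by apply: big_ge0 => u; apply: Rmult_le_pos.
set A := fun B : codebook W U n M => / INR M * \big[Rplus/0]_(j < M) (g1 (B (wn, j)) - q1).
set S := fun B : codebook W U n M => / INR M * \big[Rplus/0]_(j < M) g2 (B (wn, j)).
have hS B : 0 <= S B.
  apply: Rmult_le_pos; first by left; apply: Rinv_0_lt_compat.
  by apply: big_ge0.
have hpt (B : codebook W U n M) : Rabs (/ INR M * \big[Rplus/0]_(j < M) X (B (wn, j)) - q) <=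
             Rabs (A B) + (S B + q2).
  have -> : / INR M * \big[Rplus/0]_(j < M) X (B (wn, j)) - q = A B + (S B - q2).
    rewrite /A /S big_sub sum_const_ord hq.
    have -> : \big[Rplus/0]_(j < M) X (B (wn, j)) =
       \big[Rplus/0]_(j < M) g1 (B (wn, j)) + \big[Rplus/0]_(j < M) g2 (B (wn, j)).
      by rewrite -big_add; apply: eq_bigr => j _; rewrite hsplit.
    move: (\big[Rplus/0]_(j < M) g1 (B (wn, j))) => s1.
    move: (\big[Rplus/0]_(j < M) g2 (B (wn, j))) => s2.
    field; lra.
  apply: Rle_trans (Rabs_triang _ _) _.
  apply: Rplus_le_compat_l; exact: abs_sub_pos.
have hES : E S = q2.
  rewrite /S EB_scal EB_sum.
  have -> : \big[Rplus/0]_(j < M) E (fun B => g2 (B (wn, j))) = \big[Rplus/0]_(j < M) q2.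
    apply: eq_bigr => j _; rewrite /EB (E_one hPU (wn, j) g2) //.
  rewrite sum_const_ord; field; lra.
have hEA : E (fun B => Rabs (A B)) <= (tau / (2 * INR M * c) + c / 2) * q.
  have [q0|qpos] : q = 0 \/ 0 < q.
    have : 0 <= q by apply: big_ge0 => u; apply: Rmult_le_pos.
    lra.
    have hg10 u : g1 u = 0.
      rewrite /g1 q0 Rmult_0_r; case: Rlt_dec => h /=; first by [];
      have := hX u; lra.
    have hq10 : q1 = 0 by rewrite /q1 big1 // => u _; rewrite hg10; lra.
    have -> : (fun B => Rabs (A B)) = (fun _ => 0).
      apply: boolp.funext => B; rewrite /A big1 ?Rmult_0_r ?Rabs_R0 // => j _.
      rewrite hg10 hq10; lra.
    rewrite (EB_const hPU) q0; lra.
  pose Y := fun u => g1 u - q1.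
  have h0 : \big[Rplus/0]_u (pi u * Y u) = 0 by exact: pi_E_zero.
  have hb : \big[Rplus/0]_u (pi u * (Y u * Y u)) <= tau * q * q.
    have e1 : \big[Rplus/0]_u (pi u * (Y u * Y u)) =
              \big[Rplus/0]_u (pi u * (g1 u * g1 u)) - q1 * q1.
      have -> : \big[Rplus/0]_u (pi u * (Y u * Y u)) =
        \big[Rplus/0]_u (pi u * (g1 u * g1 u)) - \big[Rplus/0]_u (q1 * (pi u * g1 u)) -
        q1 * \big[Rplus/0]_u (pi u * Y u).
        rewrite big_distrr_R -!big_sub; apply: eq_bigr => u _; rewrite /Y; ring.
      rewrite h0 -big_distrr_R -/q1; ring.
    have e2 : \big[Rplus/0]_u (pi u * (g1 u * g1 u)) <= tau * q * q1.
      rewrite /q1 big_distrr_R; apply: big_le => u.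
      have : g1 u * g1 u <= tau * q * g1 u.
        rewrite /g1 /=; case: Rlt_dec => [hh|h] /=; first lra.
        have := hX u; have : 0 <= tau * q by nra. nra.
      have := hpi u; nra.
    have : 0 <= tau * q by nra.
    nra.
  have hA2 := EA2 h0 hb.
  apply: Rle_trans (_ : E (fun B => (A B) ^ 2 / (2 * (c * q)) + (c * q) / 2) <= _).
    apply: (EB_le hPU) => B; apply: abs_quad; nra.
  rewrite EB_add (EB_const hPU).
  have -> : (fun B => A B ^ 2 / (2 * (c * q))) = (fun B => / (2 * (c * q)) * (A B ^ 2)).
    apply: boolp.funext => B; rewrite /Rdiv; ring.
  rewrite EB_scal.
  have hA2' : E (fun B => A B ^ 2) <= tau * q * q / INR M by exact: hA2.
  apply: Rle_trans (_ : / (2 * (c * q)) * (tau * q * q / INR M) + c * q / 2 <= _).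
    apply: Rplus_le_compat_r; apply: Rmult_le_compat_l => //.
    left; apply: Rinv_0_lt_compat; nra.
  apply: Req_le; field; lra.
apply: Rle_trans (_ : E (fun B => Rabs (A B) + (S B + q2)) <= _).
  exact: (EB_le hPU).
rewrite EB_add EB_add hES (EB_const hPU).
lra.
Qed.
End PerV.


Section Asm.
Variables (W U V : finType) (PU : W -> U -> R) (PV : W -> U -> V -> R).
Hypothesis hPU : forall w, is_dist (PU w).
Hypothesis hPV : forall w u, is_dist (PV w u).
Variables (n : nat) (wn : n.-tuple W).

Definition gg (u : n.-tuple U) (v : n.-tuple V) :=
  \big[Rmult/1]_(t < n) PV (tnth wn t) (tnth u t) (tnth v t).

Lemma gg_ge0 u v : 0 <= gg u v.
Proof. apply: prod_ge0 => t; exact: (proj1 (hPV _ _)). Qed.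

Lemma QindE v : Qind PU PV wn v = \big[Rplus/0]_u (piw PU wn u * gg u v).
Proof.
rewrite /Qind rprodE.
have -> : \big[Rmult/1]_(t < n) PhiVW PU PV (tnth wn t) (tnth v t) =
  \big[Rmult/1]_(t < n) \big[Rplus/0]_(x : U) (PU (tnth wn t) x * PV (tnth wn t) x (tnth v t)).
  by apply: eq_bigr => t _; rewrite /PhiVW rsumE.
rewrite -(tuple_prod_sum (fun t x => PU (tnth wn t) x * PV (tnth wn t) x (tnth v t))).
apply: eq_bigr => u _; by rewrite /piw /gg -big_split.
Qed.

Lemma PhiVW_sum1 w : \big[Rplus/0]_(y : V) PhiVW PU PV w y = 1.
Proof.
under eq_bigr do rewrite /PhiVW rsumE.
rewrite exchange_big /=.
rewrite -(proj2 (hPU w)) rsumE; apply: eq_bigr => x _.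
by rewrite -big_distrr_R -rsumE (proj2 (hPV w x)) Rmult_1_r.
Qed.

Lemma Qind_sum1 : \big[Rplus/0]_(v : n.-tuple V) Qind PU PV wn v = 1.
Proof.
under eq_bigr do rewrite /Qind rprodE.
rewrite (tuple_prod_sum (fun t y => PhiVW PU PV (tnth wn t) y)).
by rewrite big1 // => t _; rewrite PhiVW_sum1.
Qed.

Lemma PindE M (B : codebook W U n M) v :
  Pind PV B wn v = / INR M * \big[Rplus/0]_(j < M) gg (B (wn, j)) v.
Proof. rewrite /Pind rsumE; congr (_ * _); apply: eq_bigr => j _; by rewrite rprodE. Qed.

Lemma ExpTV_bound M (Rt : R) (hM : ncw n Rt = M) (hM0 : (0 < M)%N) (tau c : R) :
  0 < tau -> 0 < c ->
  ExpTV PU PV Rt wn <= / 2 * (tau / (2 * INR M * c) + c / 2) +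
    \big[Rplus/0]_(v : n.-tuple V) \big[Rplus/0]_u (piw PU wn u *
       (if Rlt_dec (tau * Qind PU PV wn v) (gg u v) then gg u v else 0)).
Proof.
move=> ht hc.
rewrite /ExpTV rsumE hM.
under eq_bigr do rewrite /tvd rsumE.
rewrite -/(EB PU (fun B => / 2 * \big[Rplus/0]_(v : n.-tuple V) Rabs (Pind PV B wn v - Qind PU PV wn v))).
rewrite EB_scal EB_sum.
have H : forall v : n.-tuple V,
  EB PU (fun B : codebook W U n M => Rabs (Pind PV B wn v - Qind PU PV wn v)) <=
  (tau / (2 * INR M * c) + c / 2) * Qind PU PV wn v +
  2 * \big[Rplus/0]_u (piw PU wn u *
       (if Rlt_dec (tau * Qind PU PV wn v) (gg u v) then gg u v else 0)).
  move=> v; rewrite QindE /EB.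
  under eq_bigr do rewrite PindE.
  apply: (@perv _ _ _ hPU _ _ wn hM0 (fun u => gg u v)) => // u; exact: gg_ge0.
apply: Rle_trans (_ : / 2 * \big[Rplus/0]_(v : n.-tuple V) ((tau / (2 * INR M * c) + c / 2) * Qind PU PV wn v +
  2 * \big[Rplus/0]_u (piw PU wn u *
       (if Rlt_dec (tau * Qind PU PV wn v) (gg u v) then gg u v else 0))) <= _).
  apply: Rmult_le_compat_l; first lra.
  exact: big_le.
rewrite big_add -big_distrr_R -big_distrr_R Qind_sum1.
move: (\big[Rplus/0]_(v : n.-tuple V) _) => S; lra.
Qed.
End Asm.

From Stdlib Require Import Classical.
Require Import Defs.

Lemma prod_exp (I : finType) (f : I -> R) :
  \big[Rmult/1]_(i : I) exp (f i) = exp (\big[Rplus/0]_(i : I) f i).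
Proof. symmetry; apply: (big_morph exp exp_plus exp_0). Qed.

Lemma prod_inv (I : finType) (f : I -> R) :
  \big[Rmult/1]_(i : I) / (f i) = / (\big[Rmult/1]_(i : I) f i).
Proof. symmetry; apply: (big_morph Rinv Rinv_mult Rinv_1). Qed.

Lemma prod_pos (I : finType) (f : I -> R) :
  (forall i, 0 < f i) -> 0 < \big[Rmult/1]_(i : I) f i.
Proof. move=> H; apply: (big_ind (fun a => 0 < a)) => //; [lra| move=> *; nra]. Qed.

Lemma prod_zero (I : finType) (f : I -> R) i0 :
  f i0 = 0 -> \big[Rmult/1]_(i : I) f i = 0.
Proof. move=> H; rewrite (bigD1 i0) //= H Rmult_0_l //. Qed.

Section Tail.
Variables (W U V : finType) (PU : W -> U -> R) (PV : W -> U -> V -> R).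
Hypothesis hPU : forall w, is_dist (PU w).
Hypothesis hPV : forall w u, is_dist (PV w u).

Definition pp w x y := PU w x * PV w x y.
Definition ph w y := PhiVW PU PV w y.
Definition hh (lam : R) w x y :=
  if Rlt_dec 0 (pp w x y) then pp w x y * exp (lam * ln (PV w x y / ph w y)) else 0.
Definition Sw lam w := \big[Rplus/0]_(x : U) \big[Rplus/0]_(y : V) hh lam w x y.

Lemma pp_ge0 w x y : 0 <= pp w x y.
Proof. apply: Rmult_le_pos; [exact: (proj1 (hPU _)) | exact: (proj1 (hPV _ _))]. Qed.

Lemma hh_ge0 lam w x y : 0 <= hh lam w x y.
Proof.
rewrite /hh; case: Rlt_dec => h /=; last lra.
apply: Rmult_le_pos; [lra | left; exact: exp_pos].
Qed.

Lemma Sw_ge0 lam w : 0 <= Sw lam w.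
Proof. apply: big_ge0 => x; apply: big_ge0 => y; exact: hh_ge0. Qed.

Lemma ph_ge_pp w x y : pp w x y <= ph w y.
Proof.
rewrite /ph /PhiVW rsumE /pp.
apply: (@big_term_le _ (fun x => PU w x * PV w x y) x) => x'; exact: pp_ge0.
Qed.

Variables (n : nat) (wn : n.-tuple W).

Lemma tail_pt (lam s : R) (u : n.-tuple U) (v : n.-tuple V) : 0 <= lam ->
  piw PU wn u * (if Rlt_dec (exp s * Qind PU PV wn v) (gg PV wn u v) then gg PV wn u v else 0)
  <= exp (- (lam * s)) * \big[Rmult/1]_(t < n) hh lam (tnth wn t) (tnth u t) (tnth v t).
Proof.
move=> hl.
set a := fun t : 'I_n => pp (tnth wn t) (tnth u t) (tnth v t).
have hpg : piw PU wn u * gg PV wn u v = \big[Rmult/1]_(t < n) a t.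
  by rewrite /piw /gg -big_split.
have hR : 0 <= exp (- (lam * s)) * \big[Rmult/1]_(t < n) hh lam (tnth wn t) (tnth u t) (tnth v t).
  apply: Rmult_le_pos; first by left; exact: exp_pos.
  apply: prod_ge0 => t; exact: hh_ge0.
have hpi := piw_ge0 hPU wn u.
case: (classic (forall t, 0 < a t)) => [hpos|hneg]; last first.
  have [t0 ht0] := not_all_ex_not _ _ hneg.
  have a0 : a t0 = 0 by have := pp_ge0 (tnth wn t0) (tnth u t0) (tnth v t0); rewrite -/(a t0); lra.
  have hz : piw PU wn u * gg PV wn u v = 0 by rewrite hpg (prod_zero a0).
  move: hR; move: (exp (- (lam * s)) * _) => RH hR.
  case: Rlt_dec => h /=; lra.
have hPVp t : 0 < PV (tnth wn t) (tnth u t) (tnth v t).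
  have := hpos t; rewrite /a /pp.
  have := proj1 (hPU (tnth wn t)) (tnth u t).
  have := proj1 (hPV (tnth wn t) (tnth u t)) (tnth v t).
  nra.
have hphp t : 0 < ph (tnth wn t) (tnth v t).
  have := ph_ge_pp (tnth wn t) (tnth u t) (tnth v t); have := hpos t; rewrite /a; lra.
have hprod : \big[Rmult/1]_(t < n) hh lam (tnth wn t) (tnth u t) (tnth v t) =
  \big[Rmult/1]_(t < n) a t *
  exp (lam * \big[Rplus/0]_(t < n) ln (PV (tnth wn t) (tnth u t) (tnth v t) / ph (tnth wn t) (tnth v t))).
  rewrite big_distrr_R -prod_exp -big_split; apply: eq_bigr => t _.
  rewrite /hh; case: Rlt_dec => h //=; have := hpos t; rewrite /a; lra.
rewrite hprod.
case: Rlt_dec => h /=; last first.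
  rewrite Rmult_0_r; rewrite -hprod; lra.
set L := \big[Rplus/0]_(t < n) _.
have hQ : Qind PU PV wn v = \big[Rmult/1]_(t < n) ph (tnth wn t) (tnth v t) by rewrite /Qind rprodE.
have hL : exp L = gg PV wn u v / Qind PU PV wn v.
  rewrite /L -prod_exp hQ /gg /Rdiv -prod_inv -big_split; apply: eq_bigr => t _.
  rewrite exp_ln //; apply: Rdiv_lt_0_compat; [exact: hPVp | exact: hphp].
have hQp : 0 < Qind PU PV wn v by rewrite hQ; apply: prod_pos => t; exact: hphp.
have hsL : s < L.
  apply: exp_lt_inv; rewrite hL.
  apply: (Rmult_lt_reg_r (Qind PU PV wn v)) => //.
  rewrite /Rdiv Rmult_assoc Rinv_l; lra.
have he : 1 <= exp (lam * L - lam * s).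
  rewrite -exp_0; case: (Req_dec lam 0) => [->|hl0]; first by rewrite !Rmult_0_l Rminus_0_r; lra.
  left; apply: exp_increasing; nra.
rewrite -hpg.
have : 0 <= piw PU wn u * gg PV wn u v by apply: Rmult_le_pos => //; exact: gg_ge0.
move: (piw PU wn u * gg PV wn u v) => z hz.
have -> : exp (- (lam * s)) * (z * exp (lam * L)) = z * exp (lam * L - lam * s).
  rewrite /Rminus exp_plus; ring.
nra.
Qed.

Lemma tail_sum (lam s : R) : 0 <= lam ->
  \big[Rplus/0]_(v : n.-tuple V) \big[Rplus/0]_u (piw PU wn u *
     (if Rlt_dec (exp s * Qind PU PV wn v) (gg PV wn u v) then gg PV wn u v else 0))
  <= exp (- (lam * s)) * \big[Rmult/1]_(t < n) Sw lam (tnth wn t).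
Proof.
move=> hl.
apply: Rle_trans (_ : \big[Rplus/0]_(v : n.-tuple V) \big[Rplus/0]_(u : n.-tuple U)
   (exp (- (lam * s)) * \big[Rmult/1]_(t < n) hh lam (tnth wn t) (tnth u t) (tnth v t)) <= _).
  apply: big_le => v; apply: big_le => u; exact: tail_pt.
apply: Req_le.
rewrite exchange_big /=.
under eq_bigr => u _ do rewrite -big_distrr_R (tuple_prod_sum (fun t y => hh lam (tnth wn t) (tnth u t) y)).
by rewrite -big_distrr_R (tuple_prod_sum (fun t x => \big[Rplus/0]_(y : V) hh lam (tnth wn t) x y)).
Qed.
End Tail.


Lemma exp_quad z : z <= / 2 -> exp z <= 1 + z + 2 * z ^ 2.
Proof.
move=> hz.
have h1 := exp_ineq1_le (- z).
have h2 : exp z * exp (- z) = 1 by rewrite -exp_plus Rplus_opp_r exp_0.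
have hp := exp_pos z.
have hq : 0 < 1 + z + 2 * z ^ 2 by nra.
have h3 : 1 <= (1 - z) * (1 + z + 2 * z ^ 2) by nra.
nra.
Qed.

Lemma big2_lin (I J : finType) (f g h : I -> J -> R) a c :
  \big[Rplus/0]_(i : I) \big[Rplus/0]_(j : J) (f i j + a * g i j + c * h i j) =
  \big[Rplus/0]_(i : I) \big[Rplus/0]_(j : J) f i j + a * \big[Rplus/0]_(i : I) \big[Rplus/0]_(j : J) g i j
  + c * \big[Rplus/0]_(i : I) \big[Rplus/0]_(j : J) h i j.
Proof.
have E1 : forall i, \big[Rplus/0]_(j : J) (f i j + a * g i j + c * h i j) =
  \big[Rplus/0]_(j : J) f i j + a * \big[Rplus/0]_(j : J) g i j + c * \big[Rplus/0]_(j : J) h i j.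
  by move=> i; rewrite !big_add -!big_distrr_R.
by rewrite (eq_bigr _ (fun i _ => E1 i)) !big_add -!big_distrr_R.
Qed.

Section SwB.
Variables (W U V : finType) (PU : W -> U -> R) (PV : W -> U -> V -> R).
Hypothesis hPU : forall w, is_dist (PU w).
Hypothesis hPV : forall w u, is_dist (PV w u).

Definition Iw w := rsum (fun u => rsum (fun v =>
      let j := PU w u * PV w u v in
      if Req_dec_T j 0 then 0
      else j * log2 (j / (PU w u * PhiVW PU PV w v)))).

Definition bb w x y := if Rlt_dec 0 (pp PU PV w x y) then ln (PV w x y / ph PU PV w y) else 0.
Definition Bm := 1 + \big[Rplus/0]_(w : W) \big[Rplus/0]_(x : U) \big[Rplus/0]_(y : V) Rabs (bb w x y).

Lemma bb_le w x y : Rabs (bb w x y) <= Bm.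
Proof.
rewrite /Bm.
have h3 : forall w x, 0 <= \big[Rplus/0]_(y : V) Rabs (bb w x y).
  move=> w' x'; apply: big_ge0 => y'; exact: Rabs_pos.
have h2 : forall w, 0 <= \big[Rplus/0]_(x : U) \big[Rplus/0]_(y : V) Rabs (bb w x y).
  move=> w'; apply: big_ge0 => x'; exact: h3.
have a1 := @big_term_le _ (fun y => Rabs (bb w x y)) y (fun y => Rabs_pos _).
have a2 := @big_term_le _ (fun x => \big[Rplus/0]_(y : V) Rabs (bb w x y)) x (h3 w).
have a3 := @big_term_le _ (fun w => \big[Rplus/0]_(x : U) \big[Rplus/0]_(y : V) Rabs (bb w x y)) w h2.
simpl in a1, a2, a3.
move: a1 a2 a3.
move: (\big[Rplus/0]_(w0 : W) _) => S3.
move: (\big[Rplus/0]_(x0 : U) _) => S2.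
move: (\big[Rplus/0]_(y0 : V) _) => S1.
lra.
Qed.

Lemma Bm_ge1 : 1 <= Bm.
Proof.
rewrite /Bm.
have : 0 <= \big[Rplus/0]_(w : W) \big[Rplus/0]_(x : U) \big[Rplus/0]_(y : V) Rabs (bb w x y).
  apply: big_ge0 => w; apply: big_ge0 => x; apply: big_ge0 => y; exact: Rabs_pos.
move: (\big[Rplus/0]_(w0 : W) _) => S; lra.
Qed.

Lemma pos_sum1 w :
  \big[Rplus/0]_(x : U) \big[Rplus/0]_(y : V)
     (if Rlt_dec 0 (pp PU PV w x y) then pp PU PV w x y else 0) = 1.
Proof.
rewrite -(proj2 (hPU w)) rsumE; apply: eq_bigr => x _.
have -> : PU w x = PU w x * \big[Rplus/0]_(y : V) PV w x y.
  by rewrite -rsumE (proj2 (hPV w x)) Rmult_1_r.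
rewrite big_distrr_R; apply: eq_bigr => y _.
case: Rlt_dec => h //=.
have := pp_ge0 hPU hPV w x y; rewrite /pp in h *; lra.
Qed.

Lemma pos_sumI w :
  \big[Rplus/0]_(x : U) \big[Rplus/0]_(y : V)
     (if Rlt_dec 0 (pp PU PV w x y) then pp PU PV w x y * bb w x y else 0) = ln 2 * Iw w.
Proof.
rewrite /Iw rsumE big_distrr_R; apply: eq_bigr => x _.
rewrite rsumE big_distrr_R; apply: eq_bigr => y _.
rewrite /bb /pp /ph /=.
have hl2 : 0 < ln 2 by rewrite -ln_1; apply: ln_increasing; lra.
have hj := pp_ge0 hPU hPV w x y; rewrite /pp in hj.
have hphi := ph_ge_pp hPU hPV w x y; rewrite /pp /ph in hphi.
case: Rlt_dec => h /=; case: Req_dec_T => h' /=; try lra.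
have hPUp : 0 < PU w x.
  have := proj1 (hPU w) x; have := proj1 (hPV w x) y; nra.
have -> : PU w x * PV w x y / (PU w x * PhiVW PU PV w y) = PV w x y / PhiVW PU PV w y.
  field; lra.
rewrite /log2; field; lra.
Qed.

Lemma Sw_le lam w : 0 <= lam -> lam * Bm <= / 2 ->
  Sw PU PV lam w <= 1 + lam * (ln 2 * Iw w) + 2 * lam ^ 2 * Bm ^ 2.
Proof.
move=> hl hlB.
rewrite -pos_sumI.
set P1 := fun x y => if Rlt_dec 0 (pp PU PV w x y) then pp PU PV w x y else 0.
have -> : 1 + lam * \big[Rplus/0]_(x : U) \big[Rplus/0]_(y : V)
     (if Rlt_dec 0 (pp PU PV w x y) then pp PU PV w x y * bb w x y else 0) + 2 * lam ^ 2 * Bm ^ 2 =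
  \big[Rplus/0]_(x : U) \big[Rplus/0]_(y : V)
     (P1 x y + lam * (if Rlt_dec 0 (pp PU PV w x y) then pp PU PV w x y * bb w x y else 0)
      + 2 * lam ^ 2 * Bm ^ 2 * P1 x y).
  rewrite big2_lin -/P1 (pos_sum1 w); ring.
rewrite /Sw; apply: big_le => x; apply: big_le => y.
rewrite /hh /P1 /bb; case: Rlt_dec => h /=; last lra.
have hb : Rabs (ln (PV w x y / ph PU PV w y)) <= Bm.
  have := bb_le w x y; rewrite /bb; case: Rlt_dec => //= hn; lra.
set b := ln (PV w x y / ph PU PV w y) in hb *.
have hb2 : b ^ 2 <= Bm ^ 2.
  have := Bm_ge1; move: hb; unfold Rabs; case: Rcase_abs => hs hb hB /=; nra.
have hz : lam * b <= / 2.
  have : lam * b <= lam * Rabs b.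
    apply: Rmult_le_compat_l => //; exact: Rle_abs.
  have : lam * Rabs b <= lam * Bm by apply: Rmult_le_compat_l.
  lra.
have he := exp_quad hz.
set p := pp PU PV w x y in h *.
have : p * exp (lam * b) <= p * (1 + lam * b + 2 * (lam * b) ^ 2).
  apply: Rmult_le_compat_l => //; lra.
have : 0 <= p * lam ^ 2 * (Bm ^ 2 - b ^ 2).
  apply: Rmult_le_pos; [apply: Rmult_le_pos; [lra|nra] | lra].
move: (exp (lam * b)) => e.
simpl; nra.
Qed.
End SwB.


Lemma seq_count_sum (W : finType) (f : W -> R) (s : seq W) :
  \big[Rplus/0]_(x <- s) f x = \big[Rplus/0]_(w : W) (INR (count (pred1 w) s) * f w).
Proof.
elim: s => [|a s IH].
  by rewrite big_nil big1 // => w _; rewrite /= Rmult_0_l.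
rewrite big_cons IH.
have -> : \big[Rplus/0]_(w : W) (INR (count (pred1 w) (a :: s)) * f w) =
  \big[Rplus/0]_(w : W) (INR (a == w) * f w) + \big[Rplus/0]_(w : W) (INR (count (pred1 w) s) * f w).
  rewrite -big_add; apply: eq_bigr => w _ /=; rewrite plus_INR; ring.
congr (_ + _).
rewrite (bigD1 a) //= eqxx big1 => [|w hw]; first by rewrite /=; ring.
by rewrite eq_sym (negbTE hw) /= Rmult_0_l.
Qed.

Lemma nceil_ge x : 0 < x -> x <= INR (nceil x) /\ (0 < nceil x)%N.
Proof.
move=> hx.
have [h1 h2] := base_Int_part (- x).
set z := Z.opp (Int_part (- x)).
have hz : x <= IZR z by rewrite /z opp_IZR; lra.
have hz0 : Z.le 0 z by apply: le_IZR; lra.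
have hI : INR (nceil x) = IZR z by rewrite /nceil -/z INR_IZR_INZ Znat.Z2Nat.id.
rewrite hI; split => //.
case E : (nceil x) => [|m] //.
by move: hI; rewrite E /= => hI; lra.
Qed.

Section Fin.
Variables (W U V : finType) (PU : W -> U -> R) (PV : W -> U -> V -> R).
Hypothesis hPU : forall w, is_dist (PU w).
Hypothesis hPV : forall w u, is_dist (PV w u).

Lemma sum_Iw n (wn : n.-tuple W) :
  \big[Rplus/0]_(t < n) Iw PU PV (tnth wn t) = INR n * condMI PU PV wn.
Proof.
have -> : condMI PU PV wn = rsum (fun w => emp wn w * Iw PU PV w) by [].
rewrite rsumE.
have := big_tuple 0 Rplus wn predT (Iw PU PV); rewrite /= => <-.
rewrite seq_count_sum big_distrr_R; apply: eq_bigr => w _.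
rewrite /emp; case: n wn => [|m] wn.
  by rewrite tuple0 /= !Rmult_0_l.
have : 0 < INR m.+1 by apply: lt_0_INR; apply/ltP.
move=> hm; field; lra.
Qed.

Lemma prod_Sw n (wn : n.-tuple W) lam : 0 <= lam -> lam * Bm PU PV <= / 2 ->
  \big[Rmult/1]_(t < n) Sw PU PV lam (tnth wn t) <=
  exp (lam * ln 2 * (INR n * condMI PU PV wn) + INR n * (2 * lam ^ 2 * Bm PU PV ^ 2)).
Proof.
move=> hl hlB.
apply: Rle_trans (_ : \big[Rmult/1]_(t < n)
   exp (lam * (ln 2 * Iw PU PV (tnth wn t)) + 2 * lam ^ 2 * Bm PU PV ^ 2) <= _).
  apply: prod_le => t; first exact: Sw_ge0.
  apply: Rle_trans (Sw_le hPU hPV _ hl hlB) _.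
  have := exp_ineq1_le (lam * (ln 2 * Iw PU PV (tnth wn t)) + 2 * lam ^ 2 * Bm PU PV ^ 2); lra.
rewrite prod_exp big_add sum_const_ord -sum_Iw.
have -> : \big[Rplus/0]_(t < n) (lam * (ln 2 * Iw PU PV (tnth wn t))) =
  lam * ln 2 * \big[Rplus/0]_(t < n) Iw PU PV (tnth wn t).
  by rewrite big_distrr_R; apply: eq_bigr => t _; ring.
by apply: Req_le.
Qed.

Lemma general_bound n (wn : n.-tuple W) (Rt s c lam : R) :
  0 < c -> 0 <= lam -> lam * Bm PU PV <= / 2 ->
  (0 < ncw n Rt)%N ->
  ExpTV PU PV Rt wn <= / 2 * (exp s / (2 * INR (ncw n Rt) * c) + c / 2) +
    exp (- (lam * s)) * exp (lam * ln 2 * (INR n * condMI PU PV wn) + INR n * (2 * lam ^ 2 * Bm PU PV ^ 2)).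
Proof.
move=> hc hl hlB hM.
apply: Rle_trans (ExpTV_bound hPU hPV wn (erefl _) hM (exp_pos s) hc) _.
apply: Rplus_le_compat_l.
apply: Rle_trans (tail_sum hPU hPV wn s hl) _.
apply: Rmult_le_compat_l; first by left; exact: exp_pos.
exact: prod_Sw.
Qed.
End Fin.


Lemma exp_mono x y : x <= y -> exp x <= exp y.
Proof. case=> [h|->]; [left; exact: exp_increasing| lra]. Qed.

Lemma ncw_props n Rt : exp (INR n * ln 2 * Rt) <= INR (ncw n Rt) /\ (0 < ncw n Rt)%N.
Proof.
have := nceil_ge (exp_pos (Rt * INR n * ln 2)).
rewrite /ncw /Rpower.
have -> : INR n * Rt * ln 2 = INR n * ln 2 * Rt by ring.
have -> : Rt * INR n * ln 2 = INR n * ln 2 * Rt by ring.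
done.
Qed.

Lemma ln2_pos : 0 < ln 2.
Proof. rewrite -ln_1; apply: ln_increasing; lra. Qed.

Section Final.
Variables (W U V : finType) (PU : W -> U -> R) (PV : W -> U -> V -> R).
Hypothesis hPU : forall w, is_dist (PU w).
Hypothesis hPV : forall w u, is_dist (PV w u).

Local Notation B := (Bm PU PV).

Definition lamg (g : R) := Rmin (/ (2 * B)) (ln 2 * g / (8 * B ^ 2)).

Lemma lamg_props g : 0 < g -> 0 < lamg g /\ lamg g * B <= / 2 /\ lamg g <= 1 /\
   lamg g <= ln 2 * g / (8 * B ^ 2).
Proof.
move=> hg.
have hB := Bm_ge1 PU PV.
have hl2 := ln2_pos.
have h1 := Rmin_l (/ (2 * B)) (ln 2 * g / (8 * B ^ 2)).
have h2 := Rmin_r (/ (2 * B)) (ln 2 * g / (8 * B ^ 2)).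
rewrite /lamg; split; [|split; [|split]] => //.
- apply: Rmin_glb_lt; first by apply: Rinv_0_lt_compat; lra.
  apply: Rdiv_lt_0_compat; nra.
- have -> : / 2 = / (2 * B) * B by field; lra.
  apply: Rmult_le_compat_r; lra.
- apply: Rle_trans h1 _.
  rewrite -Rinv_1; apply: Rinv_le_contravar; lra.
Qed.

Lemma final_gamma (g : R) n (wn : n.-tuple W) (Rt : R) : 0 < g ->
  Rt > condMI PU PV wn + g ->
  ExpTV PU PV Rt wn <= 2 * exp (- (lamg g * (INR n * ln 2) * g / 4)).
Proof.
move=> hg hRt.
have [hl [hlB [hl1 hl2]]] := lamg_props hg.
have hB := Bm_ge1 PU PV.
have hln := ln2_pos.
set lam := lamg g in hl hlB hl1 hl2 *.
set a := INR n * ln 2.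
have ha : 0 <= a by rewrite /a; apply: Rmult_le_pos; [exact: pos_INR| lra].
set I := condMI PU PV wn in hRt *.
set c := exp (- (a * g / 4)).
have hc : 0 < c by exact: exp_pos.
have [hM hM0] := ncw_props n Rt.
have := general_bound hPU hPV wn (a * (I + g / 2)) hc (Rlt_le _ _ hl) hlB hM0.
set M := INR (ncw n Rt) in hM *.
have hMp : 0 < M by have := exp_pos (INR n * ln 2 * Rt); lra.
have hT1 : exp (a * (I + g / 2)) / (2 * M * c) <= c / 2.
  have hs : exp (a * (I + g / 2)) <= exp (a * Rt) * (c * c).
    rewrite /c -!exp_plus; apply: exp_mono.
    have : a * (I + g) <= a * Rt by apply: Rmult_le_compat_l => //; lra.
    lra.
  have hM' : exp (a * Rt) <= M by rewrite /a; exact: hM.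
  apply: (Rmult_le_reg_r (2 * M * c)); first nra.
  have -> : exp (a * (I + g / 2)) / (2 * M * c) * (2 * M * c) = exp (a * (I + g / 2)) by field; lra.
  have : exp (a * Rt) * (c * c) <= M * (c * c) by apply: Rmult_le_compat_r => //; nra.
  nra.
have hT2 : exp (- (lam * (a * (I + g / 2)))) *
   exp (lam * ln 2 * (INR n * I) + INR n * (2 * lam ^ 2 * B ^ 2)) <= exp (- (lam * a * g / 4)).
  rewrite -exp_plus; apply: exp_mono.
  have e1 : lam * ln 2 * (INR n * I) = lam * a * I by rewrite /a; ring.
  rewrite e1.
  have hn := pos_INR n.
  have : INR n * (2 * lam ^ 2 * B ^ 2) <= lam * a * g / 4.
    have h8 : lam * (8 * B ^ 2) <= ln 2 * g.
      have hB2 : 0 < 8 * B ^ 2 by nra.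
      have := Rmult_le_compat_r (8 * B ^ 2) _ _ (Rlt_le _ _ hB2) hl2.
      have -> : ln 2 * g / (8 * B ^ 2) * (8 * B ^ 2) = ln 2 * g by field; nra.
      done.
    have : INR n * lam * (lam * (8 * B ^ 2)) <= INR n * lam * (ln 2 * g).
      apply: Rmult_le_compat_l => //; nra.
    rewrite /a; nra.
  nra.
have hT3 : c <= exp (- (lam * a * g / 4)).
  rewrite /c; apply: exp_mono.
  have : lam * (a * g) <= 1 * (a * g) by apply: Rmult_le_compat_r => //; nra.
  lra.
move=> H.
move: H hT1 hT2 hT3; move: (exp (a * (I + g / 2)) / (2 * M * c)) => T1.
move: (exp (- (lam * (a * (I + g / 2)))) * _) => T2.
lra.
Qed.
End Final.


Lemma E_big (Bv g sn T : R) : 1 <= Bv -> 0 < T -> 0 < g -> 1 <= sn ->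
  1 + 8 * Bv * T / ln 2 + 32 * Bv ^ 2 * T / ln 2 ^ 2 < g * sn ->
  T <= Rmin (/ (2 * Bv)) (ln 2 * g / (8 * Bv ^ 2)) * (sn * sn * ln 2) * g / 4.
Proof.
move=> hB hT hg hs hx.
have hl := ln2_pos.
set x := g * sn in hx.
have hx1 : 8 * Bv * T / ln 2 < x.
  have : 0 <= 32 * Bv ^ 2 * T / ln 2 ^ 2.
    apply: Rmult_le_pos; [nra| left; apply: Rinv_0_lt_compat; nra].
  lra.
have hx2 : 32 * Bv ^ 2 * T / ln 2 ^ 2 < x.
  have : 0 <= 8 * Bv * T / ln 2.
    apply: Rmult_le_pos; [nra| left; apply: Rinv_0_lt_compat; nra].
  lra.
have hx0 : 1 <= x.
  have : 0 <= 8 * Bv * T / ln 2.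
    apply: Rmult_le_pos; [nra| left; apply: Rinv_0_lt_compat; nra].
  have : 0 <= 32 * Bv ^ 2 * T / ln 2 ^ 2.
    apply: Rmult_le_pos; [nra| left; apply: Rinv_0_lt_compat; nra].
  lra.
unfold Rmin; case: Rle_dec => _.
- have -> : / (2 * Bv) * (sn * sn * ln 2) * g / 4 = x * sn * (ln 2 / (8 * Bv)).
    rewrite /x; field; lra.
  have hk : 0 < ln 2 / (8 * Bv) by apply: Rdiv_lt_0_compat; lra.
  have e : 8 * Bv * T / ln 2 * (ln 2 / (8 * Bv)) = T by field; lra.
  have : 8 * Bv * T / ln 2 * (ln 2 / (8 * Bv)) <= x * (ln 2 / (8 * Bv)).
    apply: Rmult_le_compat_r; lra.
  have : x * (ln 2 / (8 * Bv)) <= x * sn * (ln 2 / (8 * Bv)).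
    apply: Rmult_le_compat_r; [lra| nra].
  lra.
- have -> : ln 2 * g / (8 * Bv ^ 2) * (sn * sn * ln 2) * g / 4 = x * x * (ln 2 ^ 2 / (32 * Bv ^ 2)).
    rewrite /x; field; nra.
  have hk : 0 < ln 2 ^ 2 / (32 * Bv ^ 2) by apply: Rdiv_lt_0_compat; nra.
  have e : 32 * Bv ^ 2 * T / ln 2 ^ 2 * (ln 2 ^ 2 / (32 * Bv ^ 2)) = T by field; nra.
  have : 32 * Bv ^ 2 * T / ln 2 ^ 2 * (ln 2 ^ 2 / (32 * Bv ^ 2)) <= x * (ln 2 ^ 2 / (32 * Bv ^ 2)).
    apply: Rmult_le_compat_r; lra.
  have : x * (ln 2 ^ 2 / (32 * Bv ^ 2)) <= x * x * (ln 2 ^ 2 / (32 * Bv ^ 2)).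
    apply: Rmult_le_compat_r; [lra| nra].
  lra.
Qed.

Lemma trivial_bound (W U V : finType) (PU : W -> U -> R) (PV : W -> U -> V -> R)
  (hPU : forall w, is_dist (PU w)) (hPV : forall w u, is_dist (PV w u))
  n (wn : n.-tuple W) (Rt : R) : ExpTV PU PV Rt wn <= 3 / 2.
Proof.
have [hM hM0] := ncw_props n Rt.
have hB : 0 * Bm PU PV <= / 2 by rewrite Rmult_0_l; lra.
have := general_bound hPU hPV wn 0 Rlt_0_1 (Rle_refl 0) hB hM0.
have -> : - (0 * 0) = 0 by ring.
have -> : 0 * ln 2 * (INR n * condMI PU PV wn) + INR n * (2 * 0 ^ 2 * Bm PU PV ^ 2) = 0 by ring.
rewrite exp_0.
have hM1 : 1 <= INR (ncw n Rt).
  move: hM0; case: (ncw n Rt) => [|m] // _; rewrite S_INR; have := pos_INR m; lra.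
have : / (2 * INR (ncw n Rt) * 1) <= / 2.
  apply: Rinv_le_contravar; lra.
rewrite /Rdiv Rmult_1_l.
lra.
Qed.


Theorem mainTheorem14 (W U V : finType) (PU : W -> U -> R) (PV : W -> U -> V -> R)
  (hPU : forall w, is_dist (PU w)) (hPV : forall w u, is_dist (PV w u)) :
  (forall gamma : nat -> R,
     cv_infty (fun n => gamma n * sqrt (INR n)) ->
     exists eps : nat -> R, Un_cv eps 0 /\
       forall (n : nat) (wn : n.-tuple W) (Rt : R),
         Rt > condMI PU PV wn + gamma n -> ExpTV PU PV Rt wn < eps n)
  /\
  (forall gamma : R, 0 < gamma ->
     exists eps : nat -> R,
       (exists c K : R, 0 < c /\ forall n : nat, eps n <= K * exp (- c * INR n)) /\
       forall (n : nat) (wn : n.-tuple W) (Rt : R),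
         Rt > condMI PU PV wn + gamma -> ExpTV PU PV Rt wn < eps n).
Proof.
have hl := ln2_pos.
split.
- move=> gamma hcv.
  exists (fun n => if Rlt_dec 0 (gamma n)
     then 3 * exp (- (lamg PU PV (gamma n) * (INR n * ln 2) * gamma n / 4)) else 2).
  split.
  + move=> e he.
    set Bv := Bm PU PV.
    have hB : 1 <= Bv := Bm_ge1 PU PV.
    set T := Rmax 1 (- ln (e / 4)).
    have hT : 0 < T by have := Rmax_l 1 (- ln (e / 4)); rewrite -/T; lra.
    have [N hN] := hcv (1 + 8 * Bv * T / ln 2 + 32 * Bv ^ 2 * T / ln 2 ^ 2).
    exists N => n hn.
    have hx := hN n hn.
    have hA : 0 < 1 + 8 * Bv * T / ln 2 + 32 * Bv ^ 2 * T / ln 2 ^ 2.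
      have : 0 <= 8 * Bv * T / ln 2.
        apply: Rmult_le_pos; [nra| left; apply: Rinv_0_lt_compat; nra].
      have : 0 <= 32 * Bv ^ 2 * T / ln 2 ^ 2.
        apply: Rmult_le_pos; [nra| left; apply: Rinv_0_lt_compat; nra].
      lra.
    have hsq := sqrt_pos (INR n).
    have hg : 0 < gamma n.
      case: (Rlt_or_le 0 (gamma n)) => // h.
      have : gamma n * sqrt (INR n) <= 0 by nra.
      lra.
    have hsn : 0 < sqrt (INR n) by nra.
    have hn1 : 1 <= INR n.
      case: n {hn hx hsq hg hsn} (hsn) => [|m] hs; first by rewrite /= sqrt_0 in hs; lra.
      rewrite S_INR; have := pos_INR m; lra.
    have hs1 : 1 <= sqrt (INR n) by rewrite -sqrt_1; apply: sqrt_le_1_alt.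
    have hE := E_big hB hT hg hs1 hx.
    rewrite sqrt_sqrt in hE; last lra.
    rewrite /Rdist; case: Rlt_dec => // _ /=.
    rewrite Rminus_0_r Rabs_right; last by left; have := exp_pos (- (lamg PU PV (gamma n) * (INR n * ln 2) * gamma n / 4)); lra.
    have h1 : exp (- (lamg PU PV (gamma n) * (INR n * ln 2) * gamma n / 4)) <= exp (ln (e / 4)).
      apply: exp_mono.
      have := Rmax_r 1 (- ln (e / 4)); rewrite -/T.
      rewrite -/Bv.
      have -> : lamg PU PV (gamma n) * (INR n * ln 2) = Rmin (/ (2 * Bv)) (ln 2 * gamma n / (8 * Bv ^ 2)) * (INR n * ln 2) by [].
      lra.
    rewrite exp_ln in h1; last lra.
    lra.
  + move=> n wn Rt hRt; case: Rlt_dec => hg /=.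
    * have := final_gamma hPU hPV hg hRt.
      have := exp_pos (- (lamg PU PV (gamma n) * (INR n * ln 2) * gamma n / 4)); lra.
    * have := trivial_bound hPU hPV wn Rt; lra.
- move=> g hg.
  exists (fun n => 3 * exp (- (lamg PU PV g * (INR n * ln 2) * g / 4))).
  have [hl0 _] := lamg_props PU PV hg.
  split.
  + exists (lamg PU PV g * ln 2 * g / 4), 3; split.
      apply: Rmult_lt_0_compat; last lra.
      apply: Rmult_lt_0_compat => //; nra.
    move=> n; apply: Req_le; congr (_ * exp _); move: (lamg PU PV g) => L; field.
  + move=> n wn Rt hRt.
    have := final_gamma hPU hPV hg hRt.
    have := exp_pos (- (lamg PU PV g * (INR n * ln 2) * g / 4)); lra.
Qed.
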